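(* Let $F_0$ be a totally real number field of degree $r$, with real embeddings $v_1,\dots,v_r$, and fix an extension of $v_1$ to an embedding $\overline{F}_0\hookrightarrow\mathbb{C}$, through which all finite extensions of $F_0$ inside $\overline{F}_0$ are regarded as subfields of $\mathbb{C}$. Let $F$ be a totally real quadratic extension of $F_0$, with $\mathrm{Gal}(F/F_0)=\{1,\tau\}$. Let $\alpha\in F$ be such that $M=F(\sqrt{\alpha})$ is an almost totally complex (ATC) quadratic extension of $F$ which is real under $v_1$. Let $K=F_0(\sqrt{\alpha\alpha^\tau})$, where $\sqrt{\alpha\alpha^\tau}=\sqrt{\alpha}\sqrt{\alpha^\tau}$, and let $L=K(\sqrt{\alpha}+\sqrt{\alpha^\tau})$ and $L'=K(\sqrt{\alpha}-\sqrt{\alpha^\tau})$. Then $K$ is an almost totally real (ATR) extension of $F_0$ which is complex under $v_1$, and the fields $L$ and $L'$ are totally imaginary.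
   Context: A quadratic extension $M/F$ of a totally real field $F$ is almost totally complex (ATC) if all archimedean places of $F$ but exactly one extend to a complex place of $M$ (so $M$ has exactly two real places). A quadratic extension $K/F_0$ of a totally real field $F_0$ is almost totally real (ATR) if exactly one real place of $F_0$ extends to a complex place of $K$, all others extending to pairs of real places. ''$M$ real under $v_1$'' means the fixed embedding extending $v_1$ maps $M$ into $\mathbb{R}$. The fields $K$, $L$, $L'$ are subfields of the Galois closure $\mathcal{M}=F(\sqrt{\alpha},\sqrt{\alpha^\tau})$ of $M/F_0$, whose Galois group over $F_0$ is dihedral of order $8$. *)

(* Defs.v *)
(* All number fields are subfields of algC (the algebraic
   complex numbers), viewed through the fixed embedding extending v_1. *)
From mathcomp Require Import all_boot all_order all_algebra all_field.
Set Implicit Arguments. Unset Strict Implicit. Unset Printing Implicit Defensive.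
Import Order.TTheory GRing.Theory Num.Theory.
Local Open Scope ring_scope.

Definition cset := algC -> Prop.

Definition is_subfield (E : cset) : Prop :=
  E 0 /\ E 1 /\
  (forall x y, E x -> E y -> E (x + y)) /\
  (forall x, E x -> E (- x)) /\
  (forall x y, E x -> E y -> E (x * y)) /\
  (forall x, E x -> x != 0 -> E (x^-1)).

Definition subset_c (E F : cset) : Prop := forall x, E x -> F x.

Definition is_number_field (E : cset) : Prop :=
  is_subfield E /\
  exists s : seq algC, forall x, E x ->
    exists c : seq rat, x = \sum_(i < size s) ratr c`_i * s`_i.

Definition adjoin (E : cset) (x : algC) : cset :=
  fun y => forall S, is_subfield S -> subset_c E S -> S x -> S y.

(* a field embedding of E into algC (values outside E are irrelevant) *)
Definition embedding (E : cset) (s : algC -> algC) : Prop :=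
  [/\ s 1 = 1,
      (forall x y, E x -> E y -> s (x + y) = s x + s y) &
      (forall x y, E x -> E y -> s (x * y) = s x * s y)].

Definition real_on (E : cset) (s : algC -> algC) : Prop :=
  forall x, E x -> s x \is Num.real.

Definition totally_real (E : cset) : Prop :=
  forall s, embedding E s -> real_on E s.

Definition totally_imaginary (E : cset) : Prop :=
  forall s, embedding E s -> ~ real_on E s.

Definition extends (F : cset) (s w : algC -> algC) : Prop :=
  forall x, F x -> s x = w x.

Definition quadratic_ext (M F : cset) : Prop :=
  [/\ subset_c F M,
      (exists x, M x /\ ~ F x) &
      (exists t, M t /\ forall x, M x -> exists p q, [/\ F p, F q & x = p + q * t])].

(* M/F almost totally complex: exactly one real place of F extends to real
   places of M, all others extend to a complex place. *)
Definition ATC (M F : cset) : Prop :=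
  [/\ totally_real F, quadratic_ext M F &
      exists w0, embedding F w0 /\
        forall w s, embedding F w -> embedding M s -> extends F s w ->
          (real_on M s <-> extends F w w0)].

(* K/F0 almost totally real: exactly one real place of F0 extends to a
   complex place of K, all others extend to pairs of real places. *)
Definition ATR (K F0 : cset) : Prop :=
  [/\ totally_real F0, quadratic_ext K F0 &
      exists w0, embedding F0 w0 /\
        forall w s, embedding F0 w -> embedding K s -> extends F0 s w ->
          (~ real_on K s <-> extends F0 w w0)].

(* Main.v *)
Require Import Defs.
From mathcomp Require Import all_boot all_order all_algebra all_field.
From mathcomp Require Import ring.
From Stdlib Require Import Classical ClassicalEpsilon FunctionalExtensionality PropExtensionality.
Import Order.TTheory GRing.Theory Num.Theory.
Local Open Scope ring_scope.
Set Implicit Arguments. Unset Strict Implicit.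

Definition span2 (E : cset) (c : algC) : cset :=
  fun z => exists p q, [/\ E p, E q & z = p + q * c].

Section SF.
Variable E : cset.
Hypothesis HE : is_subfield E.
Lemma sf0 : E 0. Proof. by case: HE. Qed.
Lemma sf1 : E 1. Proof. by case: HE => _ []. Qed.
Lemma sfD x y : E x -> E y -> E (x + y). Proof. by case: HE => _ [_ [h _]]; apply: h. Qed.
Lemma sfN x : E x -> E (- x). Proof. by case: HE => _ [_ [_ [h _]]]; apply: h. Qed.
Lemma sfM x y : E x -> E y -> E (x * y). Proof. by case: HE => _ [_ [_ [_ [h _]]]]; apply: h. Qed.
Lemma sfV x : E x -> x != 0 -> E (x^-1). Proof. by case: HE => _ [_ [_ [_ [_ h]]]]; apply: h. Qed.
Lemma sfB x y : E x -> E y -> E (x - y). Proof. by move=> *; apply: sfD => //; apply: sfN. Qed.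
Lemma sfX x : E x -> E (x ^+ 2). Proof. by move=> h; rewrite expr2; apply: sfM. Qed.
Lemma sfdiv x y : E x -> E y -> y != 0 -> E (x / y). Proof. by move=> *; apply: sfM => //; apply: sfV. Qed.
Lemma sfn n : E n%:R.
Proof. elim: n => [|n IH]; first exact: sf0. by rewrite -addn1 natrD; apply: sfD => //; apply: sf1. Qed.
End SF.

Lemma adjoin_sub E x : subset_c E (adjoin E x).
Proof. by move=> y Ey S _ sub _; apply: sub. Qed.
Lemma adjoin_in E x : adjoin E x x.
Proof. by move=> S _ _. Qed.
Lemma adjoin_min E x S : is_subfield S -> subset_c E S -> S x -> subset_c (adjoin E x) S.
Proof. by move=> HS sub Sx y; apply. Qed.
Lemma adjoin_sf E x : is_subfield (adjoin E x).
Proof.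
split; first by move=> S HS _ _; apply: (sf0 HS).
split; first by move=> S HS _ _; apply: (sf1 HS).
split; first by move=> y z hy hz S HS s1 s2; apply: (sfD HS) (hy S HS s1 s2) (hz S HS s1 s2).
split; first by move=> y hy S HS s1 s2; apply: (sfN HS) (hy S HS s1 s2).
split; first by move=> y z hy hz S HS s1 s2; apply: (sfM HS) (hy S HS s1 s2) (hz S HS s1 s2).
by move=> y hy nz S HS s1 s2; apply: (sfV HS) (hy S HS s1 s2) nz.
Qed.

Lemma span2_sf E c : is_subfield E -> E (c ^+ 2) -> is_subfield (span2 E c).
Proof.
move=> HE Hc.
split; first by exists 0, 0; rewrite mul0r addr0; split => //; apply: (sf0 HE).
split; first by exists 1, 0; rewrite mul0r addr0; split => //; [apply: (sf1 HE)|apply: (sf0 HE)].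
split.
  move=> _ _ [p [q [Ep Eq ->]]] [p' [q' [Ep' Eq' ->]]].
  exists (p + p'), (q + q'); split; [exact: (sfD HE)|exact: (sfD HE)|ring].
split.
  move=> _ [p [q [Ep Eq ->]]]; exists (- p), (- q); split; [exact: (sfN HE)|exact: (sfN HE)|ring].
split.
  move=> _ _ [p [q [Ep Eq ->]]] [p' [q' [Ep' Eq' ->]]].
  exists (p * p' + q * q' * c ^+ 2), (p * q' + q * p'); split.
  - by apply: (sfD HE); apply: (sfM HE) => //; apply: (sfM HE).
  - by apply: (sfD HE); apply: (sfM HE).
  - ring.
move=> _ [p [q [Ep Eq ->]]] nz.
set n := p ^+ 2 - q ^+ 2 * c ^+ 2.
have En : E n by apply: (sfB HE); [apply: (sfX HE)|apply: (sfM HE) => //; apply: (sfX HE)].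
have [n0|nn0] := eqVneq n 0.
  have hpq : (p - q * c) * (p + q * c) = n by rewrite /n; ring.
  move: hpq; rewrite n0 => /eqP; rewrite mulf_eq0 (negbTE nz) orbF subr_eq0 => /eqP pe.
  have [q0|qn0] := eqVneq q 0.
    by move: nz; rewrite pe q0 !mul0r addr0 eqxx.
  have Ec : E c.
    have -> : c = p / q by rewrite pe mulrAC divff // mul1r.
    exact: (sfdiv HE).
  exists (p + q * c)^-1, 0; split; [|exact: (sf0 HE)|ring].
  by apply: (sfV HE) => //; apply: (sfD HE) => //; apply: (sfM HE).
exists (p / n), (- q / n); split; [exact: (sfdiv HE)|apply: (sfdiv HE) => //; exact: (sfN HE)|].
apply: (mulfI nz); rewrite divff //.
have hpq : (p - q * c) * (p + q * c) = n by rewrite /n; ring.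
rewrite /n in nn0 hpq *; field.
by rewrite exprMn.
Qed.

Lemma adjoin_span2 E c : is_subfield E -> E (c ^+ 2) -> adjoin E c = span2 E c.
Proof.
move=> HE Hc; apply: functional_extensionality => z; apply: propositional_extensionality.
split.
  apply: adjoin_min; first exact: span2_sf.
    by move=> y Ey; exists y, 0; split => //; [exact: (sf0 HE)|ring].
  by exists 0, 1; split => //; [exact: (sf0 HE)|exact: (sf1 HE)|ring].
move=> [p [q [Ep Eq ->]]].
have HA := adjoin_sf E c.
apply: (sfD HA); first exact: adjoin_sub.
by apply: (sfM HA); [exact: adjoin_sub|exact: adjoin_in].
Qed.

Lemma span2_unique E c p q p' q' : is_subfield E -> ~ E c -> E p -> E q -> E p' -> E q' ->
  p + q * c = p' + q' * c -> p = p' /\ q = q'.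
Proof.
move=> HE nc Ep Eq Ep' Eq' h.
have [e|ne] := eqVneq q q'.
  by split => //; move: h; rewrite e => /addIr.
exfalso; apply: nc.
have -> : c = (p' - p) / (q - q').
  apply: (@mulIf _ (q - q')); first by rewrite subr_eq0.
  rewrite mulrVK ?unitfE ?subr_eq0 //.
  by apply/eqP; rewrite -subr_eq0 -(subrr (p + q * c)) {2}h; apply/eqP; ring.
by apply: (sfdiv HE); [exact: (sfB HE)|exact: (sfB HE)|rewrite subr_eq0].
Qed.

Section Emb.
Variables (E : cset) (s : algC -> algC).
Hypothesis HE : is_subfield E.
Hypothesis Hs : embedding E s.
Lemma emb1 : s 1 = 1. Proof. by case: Hs. Qed.
Lemma embD x y : E x -> E y -> s (x + y) = s x + s y. Proof. by case: Hs => _ h _; apply: h. Qed.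
Lemma embM x y : E x -> E y -> s (x * y) = s x * s y. Proof. by case: Hs => _ _ h; apply: h. Qed.
Lemma emb0 : s 0 = 0.
Proof.
have h := embD (sf0 HE) (sf0 HE); rewrite addr0 in h.
by apply: (addrI (s 0)); rewrite addr0 -h.
Qed.
Lemma embN x : E x -> s (- x) = - s x.
Proof.
move=> Ex; have h := embD Ex (sfN HE Ex); rewrite subrr emb0 in h.
by apply: (addrI (s x)); rewrite -h subrr.
Qed.
Lemma embX x : E x -> s (x ^+ 2) = s x ^+ 2.
Proof. by move=> Ex; rewrite !expr2 embM. Qed.
Lemma emb_inj x : E x -> s x = 0 -> x = 0.
Proof.
move=> Ex h; apply/eqP; apply: contraT => nz.
have := embM Ex (sfV HE Ex nz); rewrite divff // emb1 h mul0r => /eqP.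
by rewrite oner_eq0.
Qed.
Lemma emb_sub E' : subset_c E' E -> embedding E' s.
Proof. by move=> sub; split; [exact: emb1|move=> x y /sub ? /sub ?; exact: embD|move=> x y /sub ? /sub ?; exact: embM]. Qed.
End Emb.

Lemma emb_id E : embedding E id.
Proof. by []. Qed.

Lemma extension E c e (sg : algC -> algC) c' : is_subfield E -> E e -> c ^+ 2 = e -> ~ E c ->
  embedding E sg -> c' ^+ 2 = sg e ->
  exists s, [/\ embedding (span2 E c) s, extends E s sg, s c = c' &
    forall p q, E p -> E q -> s (p + q * c) = sg p + sg q * c'].
Proof.
move=> HE Ee hc nc Hsg hc'.
pose P z (pq : algC * algC) := E pq.1 /\ E pq.2 /\ z = pq.1 + pq.2 * c.
pose r z := epsilon (inhabits (0, 0)) (P z).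
pose s z := sg (r z).1 + sg (r z).2 * c'.
have key : forall p q, E p -> E q -> s (p + q * c) = sg p + sg q * c'.
  move=> p q Ep Eq.
  have : P (p + q * c) (r (p + q * c)).
    by apply: epsilon_spec; exists (p, q).
  move=> [E1 [E2 h]].
  by rewrite /s; have [-> ->] := span2_unique HE nc E1 E2 Ep Eq (esym h).
clearbody s.
have E0 := sf0 HE; have E1 := sf1 HE.
exists s; split => //.
- split.
  + by have := key 1 0 E1 E0; rewrite mul0r addr0 (emb0 HE Hsg) mul0r addr0 (emb1 Hsg).
  + move=> _ _ [p [q [Ep Eq ->]]] [p' [q' [Ep' Eq' ->]]].
    have -> : p + q * c + (p' + q' * c) = (p + p') + (q + q') * c by ring.
    rewrite (key _ _ (sfD HE Ep Ep') (sfD HE Eq Eq')) !key // !(embD Hsg) //; ring.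
  + move=> _ _ [p [q [Ep Eq ->]]] [p' [q' [Ep' Eq' ->]]].
    have -> : (p + q * c) * (p' + q' * c) = (p * p' + q * q' * e) + (p * q' + q * p') * c.
      by rewrite -hc; ring.
    have X1 : E (p * p' + q * q' * e) by apply: (sfD HE); [apply: (sfM HE)|apply: (sfM HE) => //; apply: (sfM HE)].
    have X2 : E (p * q' + q * p') by apply: (sfD HE); apply: (sfM HE).
    rewrite (key _ _ X1 X2) !key // !(embD Hsg, embM Hsg).
    all: try by repeat (apply: (sfM HE) || apply: (sfD HE)).
    rewrite -hc'; ring.
- move=> y Ey; have := key y 0 Ey E0; rewrite mul0r addr0 => ->.
  by rewrite (emb0 HE Hsg) mul0r addr0.
- have := key 0 1 E0 E1; rewrite add0r mul1r => ->.
  by rewrite (emb0 HE Hsg) (emb1 Hsg) add0r mul1r.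
Qed.

Lemma emb_comp E (s t : algC -> algC) : is_subfield E -> embedding E t -> (forall x, E x -> E (t x)) ->
  embedding E s -> embedding E (fun z => s (t z)).
Proof.
move=> HE Ht tE Hs; split.
- by rewrite (emb1 Ht) (emb1 Hs).
- by move=> x y Ex Ey; rewrite (embD Ht) // (embD Hs) //; apply: tE.
- by move=> x y Ex Ey; rewrite (embM Ht) // (embM Hs) //; apply: tE.
Qed.
Lemma sq_real_nonreal (c : algC) : c ^+ 2 \is Num.real -> c \isn't Num.real -> c ^+ 2 < 0.
Proof.
move=> Hr Hn; rewrite realEsqr in Hn.
by rewrite real_ltNge ?Hn ?real0.
Qed.

Lemma sq_pos_real (c : algC) : 0 < c ^+ 2 -> c \is Num.real.
Proof. by move=> h; rewrite realEsqr ltW. Qed.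

Lemma real_nz_sq_pos (c : algC) : c \is Num.real -> c != 0 -> 0 < c ^+ 2.
Proof. by move=> r nz; rewrite real_exprn_even_gt0 ?nz ?orbT. Qed.

Lemma ineq_key (A B c d : algC) : A < 0 -> B < 0 -> c \is Num.real -> c ^+ 2 = A * B ->
  d \is Num.real -> d ^+ 2 = A + B + 2 * c -> d = 0.
Proof.
move=> hA hB rc hc rd hd.
have rA : A \is Num.real by rewrite ltr0_real.
have rB : B \is Num.real by rewrite ltr0_real.
set x := A + B + 2 * c; set y := A + B - 2 * c.
have rx : x \is Num.real by rewrite /x !rpredD ?rpredM ?rpred_nat.
have ry : y \is Num.real by rewrite /y !(rpredD, rpredN) ?rpredM ?rpred_nat.
have hxy : x * y = (A - B) ^+ 2.
  rewrite /x /y; have -> : (A + B + 2 * c) * (A + B - 2 * c) = (A + B)^+2 - 4 * c^+2 by ring.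
  by rewrite hc; ring.
have hxy0 : 0 <= x * y by rewrite hxy -realEsqr rpredB.
have sxy : x + y < 0.
  have -> : x + y = 2 * (A + B) by rewrite /x /y; ring.
  by rewrite pmulr_rlt0 // ltr_nDl // ltW.
have hx : x <= 0.
  rewrite real_leNgt ?real0 //; apply/negP => x0.
  have y0 : 0 <= y by rewrite -(pmulr_rge0 _ x0).
  by have := lt_le_trans sxy (addr_ge0 (ltW x0) y0); rewrite ltxx.
have d0 : d ^+ 2 = 0 by apply/le_anti; rewrite {1}hd hx /= -realEsqr.
by apply/eqP; rewrite -sqrf_eq0 d0.
Qed.

Theorem mainTheorem2 (F0 F : cset) (tau : algC -> algC) (alpha a b : algC) :
  is_number_field F0 -> totally_real F0 ->
  is_subfield F -> quadratic_ext F F0 -> totally_real F ->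
  (* Gal(F/F0) = {1, tau} *)
  embedding F tau -> (forall x, F x -> F (tau x)) ->
  (forall x, F0 x -> tau x = x) -> (exists x, F x /\ tau x <> x) ->
  F alpha -> a ^+ 2 = alpha -> b ^+ 2 = tau alpha ->
  ATC (adjoin F a) F -> real_on (adjoin F a) id ->
  [/\ ATR (adjoin F0 (a * b)) F0,
      ~ real_on (adjoin F0 (a * b)) id,
      totally_imaginary (adjoin (adjoin F0 (a * b)) (a + b)) &
      totally_imaginary (adjoin (adjoin F0 (a * b)) (a - b))].
Proof.
move=> [HF0 _] TR0 HF qF TRF embt tauF tau0 [x0 [Fx0 tx0]] Falpha ha hb
  [_ qM [w0 [Hw0 Hatc]]] realM.
case: qF => sub0F _ [t [Ft repF]].
have [p0 [q0 [Ep0 Eq0 ht2]]] := repF _ (sfX HF Ft).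
pose u := 2 * t - q0.
pose D := 4 * p0 + q0 ^+ 2.
have ED : F0 D.
  by rewrite /D; apply: (sfD HF0); [apply: (sfM HF0) => //; apply: (sfn HF0)|apply: (sfX HF0)].
have hu : u ^+ 2 = D.
  rewrite /u /D; have -> : (2 * t - q0) ^+ 2 = 4 * t ^+ 2 - 4 * q0 * t + q0 ^+ 2 by ring.
  by rewrite ht2; ring.
have two0 : (2 : algC) != 0 by rewrite pnatr_eq0.
have Fu : F u.
  rewrite /u; apply: (sfB HF); last by apply: sub0F.
  by apply: (sfM HF) => //; apply: (sfn HF).
have Fspan : F = span2 F0 u.
  apply: functional_extensionality => z; apply: propositional_extensionality; split.
    move=> /repF [p [q [Ep Eq ->]]].
    exists (p + q * q0 / 2), (q / 2); split.
    - apply: (sfD HF0) => //; apply: (sfdiv HF0) => //; [apply: (sfM HF0)|apply: (sfn HF0)] => //.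
    - by apply: (sfdiv HF0) => //; apply: (sfn HF0).
    - by rewrite /u; field.
  move=> [p [q [Ep Eq ->]]].
  by apply: (sfD HF); [apply: sub0F|apply: (sfM HF) => //; apply: sub0F].
have nu : ~ F0 u.
  move=> F0u; apply: tx0; apply: tau0.
  move: Fx0; rewrite Fspan => -[p [q [Ep Eq ->]]].
  by apply: (sfD HF0) => //; apply: (sfM HF0).
have tauspan' : forall P Q, F0 P -> F0 Q -> tau (P + Q * u) = P + Q * tau u.
  move=> P Q EP EQ; have FP := sub0F P EP; have FQ := sub0F Q EQ.
  by rewrite (embD embt FP (sfM HF FQ Fu)) (embM embt FQ Fu) (tau0 _ EP) (tau0 _ EQ).
have tauu : tau u = - u.
  have h2 : tau u ^+ 2 = u ^+ 2 by rewrite -(embX embt Fu) hu (tau0 _ ED).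
  have : (tau u - u) * (tau u + u) == 0 by apply/eqP; rewrite -[RHS](subrr (u ^+ 2)) -{1}h2; ring.
  rewrite mulf_eq0 subr_eq0 addr_eq0 => /orP [/eqP e|/eqP //].
  exfalso; apply: tx0; move: Fx0; rewrite Fspan => -[p [q [Ep Eq ->]]].
  by rewrite tauspan' // e.
have tauspan : forall P Q, F0 P -> F0 Q -> tau (P + Q * u) = P - Q * u.
  by move=> P Q EP EQ; rewrite tauspan' // tauu mulrN.
have [p1 [q1 [Ep1 Eq1 alphae]]] : span2 F0 u alpha by rewrite -Fspan.
pose T := 2 * p1.
pose N := p1 ^+ 2 - q1 ^+ 2 * D.
have ET : F0 T by rewrite /T; apply: (sfM HF0) => //; apply: (sfn HF0).
have EN : F0 N by rewrite /N; apply: (sfB HF0); [apply: (sfX HF0)|apply: (sfM HF0) => //; apply: (sfX HF0)].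
have htalpha : tau alpha = p1 - q1 * u by rewrite alphae tauspan.
have hT : alpha + tau alpha = T by rewrite htalpha alphae /T; ring.
have hN : alpha * tau alpha = N by rewrite htalpha alphae /N -hu; ring.
have Fa : ~ F a.
  move=> Fa; case: qM => _ [y [My nFy]] _; apply: nFy.
  by apply: (adjoin_min HF (fun _ h => h) Fa).
have Mspan : adjoin F a = span2 F a by apply: adjoin_span2 => //; rewrite ha.
have w0id : extends F id w0.
  by apply: (Hatc id id (emb_id F) (emb_id _) (fun _ _ => erefl)).1.
have KEY : forall sg, embedding F sg -> ~ extends F sg id -> sg alpha < 0.
  move=> sg Hsg nid.
  have [s [Hs exts sa skey]] := extension HF Falpha ha Fa Hsg (sqrtCK (sg alpha)).
  rewrite -Mspan in Hs.
  have nreal : ~ real_on (adjoin F a) s.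
    move=> hr; apply: nid => y Fy.
    by rewrite ((Hatc sg s Hsg Hs exts).1 hr y Fy) -(w0id y Fy).
  have a'nr : sqrtC (sg alpha) \isn't Num.real.
    apply/negP => ra; apply: nreal => z; rewrite Mspan => -[p [q [Fp Fq ->]]].
    rewrite skey //; apply: rpredD; first exact: TRF Hsg p Fp.
    by apply: rpredM => //; exact: TRF Hsg q Fq.
  by have := sq_real_nonreal _ a'nr; rewrite sqrtCK; apply; exact: TRF Hsg alpha Falpha.
have alpha_pos : 0 < alpha.
  rewrite -ha; apply: real_nz_sq_pos; first by have := realM a (@adjoin_in F a).
  by apply/eqP => a0; apply: Fa; rewrite a0; apply: (sf0 HF).
have talpha_neg : tau alpha < 0.
  apply: KEY => // h; apply: tx0; rewrite (h x0 Fx0) //.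
have N_neg : N < 0 by rewrite -hN pmulr_rlt0.
have hab2 : (a * b) ^+ 2 = N by rewrite exprMn ha hb.
have ab_nr : a * b \isn't Num.real.
  by rewrite realEsqr hab2 (lt_geF N_neg).
have nab0 : ~ F0 (a * b).
  move=> h; move/negP: ab_nr; apply; exact: (TR0 _ (@emb_id F0) _ h).
have Kspan : adjoin F0 (a * b) = span2 F0 (a * b) by apply: adjoin_span2 => //; rewrite hab2.
have ext0 : forall w, embedding F0 w -> ~ extends F0 w id ->
    exists A B, [/\ A < 0, B < 0, w N = A * B & w T = A + B].
  move=> w Hw nid.
  have [sg [Hsg exts _ _]] := extension HF0 ED hu nu Hw (sqrtCK (w D)).
  rewrite -Fspan in Hsg.
  have Hsg' : embedding F (fun z => sg (tau z)) by apply: emb_comp.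
  exists (sg alpha), (sg (tau alpha)); split.
  - apply: KEY => // h; apply: nid => y Ey.
    by rewrite -(exts y Ey) (h y (sub0F y Ey)).
  - apply: (KEY (fun z => sg (tau z))) => // h; apply: nid => y Ey.
    by rewrite -(exts y Ey) -{1}(tau0 y Ey) (h y (sub0F y Ey)).
  - by rewrite -(exts N EN) -hN (embM Hsg) //; apply: tauF.
  - by rewrite -(exts T ET) -hT (embD Hsg) //; apply: tauF.
have ab0L : forall z, adjoin (adjoin F0 (a * b)) z (a * b).
  by move=> z; apply: adjoin_sub; apply: adjoin_in.
have F0L : forall z, subset_c F0 (adjoin (adjoin F0 (a * b)) z).
  by move=> z y Ey; apply: adjoin_sub; apply: adjoin_sub.
have Limag : forall z g, adjoin (adjoin F0 (a * b)) z g -> g ^+ 2 = N -> z ^+ 2 = T + (g + g) ->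
    z != 0 -> totally_imaginary (adjoin (adjoin F0 (a * b)) z).
  move=> z g Lg hg hz nz s Hs hr.
  have HL := adjoin_sf (adjoin F0 (a * b)) z.
  have Lz : adjoin (adjoin F0 (a * b)) z z by apply: adjoin_in.
  have Hw : embedding F0 s by exact: (emb_sub Hs (F0L z)).
  have rc := hr g Lg; have rd := hr z Lz.
  have hc2 : s g ^+ 2 = s N by rewrite -(embX Hs Lg) hg.
  case: (classic (extends F0 s id)) => [sid|nid].
    by move: rc; rewrite /= realEsqr hc2 (sid N EN) (lt_geF N_neg).
  have [A [B [hA hB hNe hTe]]] := ext0 s Hw nid.
  move/eqP: nz; apply; apply: (emb_inj HL Hs Lz).
  apply: (ineq_key hA hB rc); first by rewrite hc2.
    exact: rd.
  rewrite -(embX Hs Lz) hz (embD Hs) ?(embD Hs) //.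
  - by rewrite hTe; ring.
  - exact: F0L z T ET.
  - exact: (sfD HL Lg Lg).
have Kab : adjoin F0 (a * b) (a * b) by apply: adjoin_in.
have HK := adjoin_sf F0 (a * b).
split.
- split => //.
    split; first exact: adjoin_sub.
      by exists (a * b).
    exists (a * b); split => // y; rewrite Kspan => -[p [q [Ep Eq ->]]]; by exists p, q.
  exists id; split; first exact: emb_id.
  move=> w s Hw Hs exts; split.
    move=> nr; apply: NNPP => nid; apply: nr.
    have [A [B [hA hB hNe _]]] := ext0 w Hw nid.
    have hs2 : s (a * b) ^+ 2 = A * B by rewrite -(embX Hs Kab) hab2 (exts N EN).
    have rs : s (a * b) \is Num.real.
      by apply: sq_pos_real; rewrite hs2 nmulr_rgt0.
    move=> y; rewrite Kspan => -[p [q [Ep Eq ->]]].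
    have Kp : adjoin F0 (a * b) p by apply: adjoin_sub.
    have Kq : adjoin F0 (a * b) q by apply: adjoin_sub.
    rewrite (embD Hs Kp (sfM HK Kq Kab)) (embM Hs Kq Kab) (exts p Ep) (exts q Eq).
    by apply: rpredD; [exact: TR0 Hw p Ep|apply: rpredM => //; exact: TR0 Hw q Eq].
  move=> wid hr; have := hr _ Kab.
  have e : s (a * b) ^+ 2 = N.
  have h1 := embX Hs Kab; rewrite hab2 in h1.
  by rewrite -h1 (exts N EN) (wid N EN).
  by rewrite realEsqr e (lt_geF N_neg).
- by move=> hr; move/negP: ab_nr; apply; have := hr _ Kab.
- apply: (Limag _ (a * b) (ab0L _)).
    by rewrite hab2.
    by rewrite -hT -hb -ha; ring.
  apply/eqP => e; have eb : b = - a by apply/eqP; rewrite -addr_eq0 addrC e.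
  by move: talpha_neg; rewrite -hb eb sqrrN ha => h; have := lt_trans h alpha_pos; rewrite ltxx.
- apply: (Limag _ (- (a * b)) (sfN (adjoin_sf _ _) (ab0L _))).
    by rewrite sqrrN hab2.
    by rewrite -hT -hb -ha; ring.
  apply/eqP => e; have eb : b = a by apply/eqP; rewrite eq_sym -subr_eq0 e.
  by move: talpha_neg; rewrite -hb eb ha => h; have := lt_trans h alpha_pos; rewrite ltxx.
Qed.
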